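(* Let $G$ be a graph with $V(G)=[n]$, $k\ge1$, $H=G^k$, and let $(P,N)=R[H]$ be the sample set defined below. Then every CNF formula consistent with $(P,N)$ has at least $\chi(H)$ clauses.
   Context: $G^k$ is the $k$-fold lexicographic product; its vertices are tuples $\vec u=(u_1,\dots,u_k)\in V(G)^k$, and $\vec u\vec v\in E(G^k)$ iff there is $i$ with $u_j=v_j$ for $j<i$ and $u_iv_i\in E(G)$. For $u\in[n]$ let $\mathrm{enc}(u)=0^{u-1}10^{n-u}\in\{0,1\}^n$, and for an edge $uv$ let $\mathrm{enc}(uv)\in\{0,1\}^n$ have 1s exactly at positions $u$ and $v$. Samples lie in $\{0,1\}^{nk}$ (variables $z(i,u)$, $i\in[k]$, $u\in[n]$, in $k$ blocks). Negative samples: $N=\{\mathrm{enc}(u_1)\cdots\mathrm{enc}(u_k):\vec u\in V(H)\}$. Positive samples: $P=\{\mathrm{enc}(u_1)\cdots\mathrm{enc}(u_{i-1})\,\mathrm{enc}(u_iv)\,\mathrm{enc}(u_{i+1})\cdots\mathrm{enc}(u_k):\vec u\in V(H),\ i\in[k],\ u_iv\in E(G)\}$. A formula is consistent if it is true on all of $P$ and false on all of $N$. $\chi$ is the chromatic number. *)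

(* Defs.v *)
From mathcomp Require Import all_boot.

Definition simple_graph {T : finType} (e : rel T) : Prop :=
  symmetric e /\ irreflexive e.

Definition colorable {T : finType} (e : rel T) (c : nat) : bool :=
  [exists f : {ffun T -> 'I_c}, [forall x, forall y, e x y ==> (f x != f y)]].

Lemma colorable_card {T : finType} {e : rel T} :
  irreflexive e -> colorable e #|T|.
Proof.
move=> irr; apply/existsP; exists [ffun x => enum_rank x].
apply/forallP=> x; apply/forallP=> y; apply/implyP=> exy.
rewrite !ffunE; apply/negP=> /eqP/enum_rank_inj Exy.
by move: exy; rewrite Exy irr.
Qed.

Definition chromatic_number {T : finType} {e : rel T} (irr : irreflexive e) : nat :=
  ex_minn (ex_intro (fun c => colorable e c) #|T| (colorable_card irr)).

(* k-fold lexicographic product G^k; vertices are k-tuples, as finite functions. *)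
Definition lexpow_rel {n : nat} (k : nat) (e : rel 'I_n) : rel {ffun 'I_k -> 'I_n} :=
  fun u v => [exists i : 'I_k,
                [forall j : 'I_k, (j < i)%N ==> (u j == v j)] && e (u i) (v i)].

Lemma lexpow_irr {n : nat} (k : nat) {e : rel 'I_n} :
  irreflexive e -> irreflexive (lexpow_rel k e).
Proof.
move=> irr u; rewrite /lexpow_rel; apply/negbTE/negP=> /existsP [i /andP [_]]; by rewrite irr.
Qed.

(* Boolean assignments to the variables z(i,u), i in [k], u in [n]. *)
Definition assignment (n k : nat) := 'I_k -> 'I_n -> bool.

(* Literal: variable (i,u) with polarity b (true = positive literal z(i,u),
   false = negated literal). A clause is a disjunction (list) of literals,
   a CNF formula a conjunction (list) of clauses. *)
Definition literal (n k : nat) := ('I_k * 'I_n * bool)%type.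
Definition clause (n k : nat) := seq (literal n k).
Definition cnf (n k : nat) := seq (clause n k).

Definition eval_lit {n k : nat} (a : assignment n k) (l : literal n k) : bool :=
  a l.1.1 l.1.2 == l.2.
Definition eval_clause {n k : nat} (a : assignment n k) (C : clause n k) : bool :=
  has (eval_lit a) C.
Definition eval_cnf {n k : nat} (a : assignment n k) (phi : cnf n k) : bool :=
  all (eval_clause a) phi.

(* Negative sample enc(u_1)...enc(u_k). *)
Definition neg_sample {n k : nat} (u : {ffun 'I_k -> 'I_n}) : assignment n k :=
  fun j w => w == u j.
(* Positive sample: block i replaced by enc(u_i v). *)
Definition pos_sample {n k : nat} (u : {ffun 'I_k -> 'I_n}) (i : 'I_k) (v : 'I_n)
  : assignment n k :=
  fun j w => if j == i then (w == u i) || (w == v) else w == u j.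

(* Consistency with the sample set R[G^k] = (P, N). *)
Definition consistent {n k : nat} (e : rel 'I_n) (phi : cnf n k) : Prop :=
  (forall (u : {ffun 'I_k -> 'I_n}) (i : 'I_k) (v : 'I_n),
      e (u i) v -> eval_cnf (pos_sample u i v) phi) /\
  (forall u : {ffun 'I_k -> 'I_n}, ~~ eval_cnf (neg_sample u) phi).

(* Main.v *)
Require Import Defs.
From mathcomp Require Import all_boot.

Theorem mainTheorem16 (n k : nat) (e : rel 'I_n)
  (Hsym : symmetric e) (Hirr : irreflexive e) (Hk : (1 <= k)%N)
  (phi : cnf n k) :
  consistent e phi ->
  (chromatic_number (lexpow_irr k Hirr) <= size phi)%N.
Proof.
case=> Hpos Hneg.
pose a (u : {ffun 'I_k -> 'I_n}) := fun C : clause n k => ~~ eval_clause (neg_sample u) C.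
have Hhas : forall u, has (a u) phi.
  move=> u; move: (Hneg u); rewrite /eval_cnf -has_predC.
  by apply: sub_has => C.
have Hlt : forall u, (find (a u) phi < size phi)%N by move=> u; rewrite -has_find.
have Hcol : colorable (lexpow_rel k e) (size phi).
  apply/existsP; exists [ffun u => Ordinal (Hlt u)].
  apply/forallP=> u; apply/forallP=> v; apply/implyP=> /existsP [i /andP [_ He]].
  rewrite !ffunE; apply/negP=> /eqP [] Efind.
  have Cu := nth_find [::] (Hhas u).
  have Cv := nth_find [::] (Hhas v).
  rewrite -Efind in Cv.
  set C := nth [::] phi _ in Cu Cv.
  have Cin : C \in phi by rewrite mem_nth.
  move: (Hpos u i (v i) He); rewrite /eval_cnf => /allP /(_ C Cin) /hasP [l lC].
  rewrite /eval_lit /pos_sample.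
  case: l lC => [[j w] b] lC /=.
  case: (boolP ((j == i) && (w == v i))) => [/andP [/eqP Ej /eqP Ew] | Hne].
  - subst j w; rewrite eqxx [_ == v i]eqxx orbT => /eqP Eb; subst b.
    move: Cv; rewrite /a /eval_clause => /hasPn /(_ _ lC).
    by rewrite /eval_lit /neg_sample /= eqxx.
  - move=> Hl.
    move: Cu; rewrite /a /eval_clause => /hasPn /(_ _ lC).
    rewrite /eval_lit /neg_sample /=.
    move: Hl Hne; case: (j =P i) => [Ej|Nj] /=; last by move=> -> /negP.
    subst j; case: (w =P v i) => //= _; rewrite orbF => ->.
    by move/negP.
rewrite /chromatic_number.
by case: ex_minnP => m _ /(_ _ Hcol).
Qed.
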